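(* Let $R$ be an associative ring with identity and $M$ a left $R$-module which is projective in $\sigma[M]$. Then $Nil_*(M)\subseteq Rad(M)$.
   Context: $\Lambda^{fi}(M)$ is the set of fully invariant submodules of $M$. For $N,L\leq M$, $N_ML=\sum\{f(N)\mid f\in\mathrm{Hom}_R(M,L)\}$. $Spec(\Lambda^{fi}(M))$ is the set of $Q\in\Lambda^{fi}(M)$, $Q\neq M$, such that for all $N,L\in\Lambda^{fi}(M)$, $N_ML\subseteq Q$ implies $N\subseteq Q$ or $L\subseteq Q$. The lowest radical of $M$ is $Nil_*(M)=\bigcap\{Q\mid Q\in Spec(\Lambda^{fi}(M))\}$. $Rad(M)$ is the Jacobson radical of $M$ (intersection of all maximal submodules). *)

(* Defs.v *)
From HB Require Import structures.
From Stdlib Require List.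
From mathcomp Require Import all_boot all_algebra.
Set Implicit Arguments. Unset Strict Implicit. Unset Printing Implicit Defensive.
Import GRing.Theory.
Local Open Scope ring_scope.

(* Left R-modules are MathComp's [lmodType R] over an associative ring with
   identity [R : pzRingType]; R-homomorphisms M -> L are [{linear M -> L}].
   Submodules of M are predicates [M -> Prop]. *)

Section ModuleDefs.
Variable R : pzRingType.

Definition is_submod (M : lmodType R) (N : M -> Prop) : Prop :=
  N 0 /\ (forall x y, N x -> N y -> N (x + y)) /\
  (forall (r : R) x, N x -> N (r *: x)).

Definition subm (M : Type) (A B : M -> Prop) : Prop := forall x, A x -> B x.

Definition fully_invariant (M : lmodType R) (N : M -> Prop) : Prop :=
  is_submod N /\ forall (f : {linear M -> M}) x, N x -> N (f x).

(* N_M L = sum { f(N) | f in Hom_R(M, L) }, L <= M; the sum of submodules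
   consists of the finite sums of their elements. *)
Definition prodM (M : lmodType R) (N L : M -> Prop) : M -> Prop :=
  fun x => exists s : seq ({linear M -> M} * M),
    (forall p, List.In p s -> (forall m, L (p.1 m)) /\ N p.2) /\
    x = \sum_(p <- s) p.1 p.2.

Definition fi_prime (M : lmodType R) (Q : M -> Prop) : Prop :=
  fully_invariant Q /\ (exists x, ~ Q x) /\
  forall N L : M -> Prop, fully_invariant N -> fully_invariant L ->
    subm (prodM N L) Q -> subm N Q \/ subm L Q.

Definition lowest_radical (M : lmodType R) : M -> Prop :=
  fun x => forall Q, fi_prime Q -> Q x.

Definition maximal_submod (M : lmodType R) (K : M -> Prop) : Prop :=
  is_submod K /\ (exists x, ~ K x) /\
  forall K' : M -> Prop, is_submod K' -> subm K K' ->
    subm K' K \/ (forall x, K' x).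

Definition Rad (M : lmodType R) : M -> Prop :=
  fun x => forall K, maximal_submod K -> K x.

Definition M_generated (M L : lmodType R) : Prop :=
  forall y : L, exists s : seq ({linear M -> L} * M),
    y = \sum_(p <- s) p.1 p.2.

Definition in_sigma (M N : lmodType R) : Prop :=
  exists (L : lmodType R) (i : {linear N -> L}),
    M_generated M L /\ injective i.

Definition projective_in_sigma (M : lmodType R) : Prop :=
  in_sigma M M /\
  forall (N : lmodType R), in_sigma M N ->
  forall (L : lmodType R) (g : {linear N -> L}), (forall y : L, exists x : N, g x = y) ->
  forall f : {linear M -> L}, exists h : {linear M -> N},
    forall m, g (h m) = f m.
End ModuleDefs.

(* Main.v *)
From HB Require Import structures.
Require Import Defs.
From mathcomp Require Import all_boot all_algebra.
From Stdlib Require Import Classical ClassicalEpsilon FunctionalExtensionality PropExtensionality.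
Set Implicit Arguments. Unset Strict Implicit. Unset Printing Implicit Defensive.
Import GRing.Theory.
Local Open Scope ring_scope.

Definition mklin (R : pzRingType) (U V : lmodType R) (f : U -> V) (hf : linear f) : {linear U -> V} :=
  HB.pack f (GRing.isLinear.Build R U V *:%R f hf).

Lemma mklinE (R : pzRingType) (U V : lmodType R) (f : U -> V) (hf : linear f) x : mklin hf x = f x.
Proof. by []. Qed.

Section Quot.
Variables (R : pzRingType) (M : lmodType R) (K : M -> Prop) (hK : is_submod K).

Definition canon (x : M) : M := epsilon (inhabits 0) (fun y => K (x - y)).

Lemma Kopp x : K x -> K (- x).
Proof. case: hK => _ [_ hs] kx. by rewrite -scaleN1r; apply: hs. Qed.
Lemma Kadd x y : K x -> K y -> K (x + y).
Proof. by case: hK => _ [ha _]; apply: ha. Qed.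
Lemma Ksub x y : K x -> K y -> K (x - y).
Proof. by move=> kx ky; apply: Kadd => //; apply: Kopp. Qed.

Lemma canon1 x : K (x - canon x).
Proof. apply: (epsilon_spec (inhabits 0) (fun y => K (x - y))). exists x. by rewrite subrr; case: hK. Qed.

Lemma canon2 x y : K (x - y) -> canon x = canon y.
Proof.
move=> kxy; rewrite /canon; congr epsilon; apply: functional_extensionality => z.
apply: propositional_extensionality; split=> h.
  have -> : y - z = (x - z) - (x - y) by by rewrite opprB [RHS]addrC addrA subrK.
  exact: Ksub.
have -> : x - z = (x - y) + (y - z) by rewrite addrA subrK.
exact: Kadd.
Qed.

Definition qpred (x : M) : bool := canon x == x.
Definition quot := let _ := hK in {x : M | qpred x}.
HB.instance Definition _ := Choice.on quot.

Lemma qpi_proof x : qpred (canon x).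
Proof. apply/eqP; apply: canon2; have := canon1 x.
by move/Kopp; rewrite opprB. Qed.
Definition qpi (x : M) : quot := exist _ (canon x) (qpi_proof x).

Lemma qpi_eq x y : qpi x = qpi y <-> K (x - y).
Proof. split.
  move=> /(congr1 sval) /= e.
  have := Ksub (canon1 x) (canon1 y). rewrite e.
  by rewrite opprB addrA subrK.
by move=> h; apply: val_inj => /=; apply: canon2.
Qed.

Lemma qpiK (a : quot) : qpi (sval a) = a.
Proof. apply: val_inj => /=. by case: a => x /= /eqP. Qed.

Definition qzero := qpi 0.
Definition qopp (a : quot) := qpi (- sval a).
Definition qadd (a b : quot) := qpi (sval a + sval b).
Definition qscale (r : R) (a : quot) := qpi (r *: sval a).

Lemma Kcanon x : K (canon x - x).
Proof. by have := Kopp (canon1 x); rewrite opprB. Qed.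

Lemma qaddE x y : qadd (qpi x) (qpi y) = qpi (x + y).
Proof. apply/qpi_eq => /=.
have -> : canon x + canon y - (x + y) = (canon x - x) + (canon y - y).
  by rewrite opprD addrACA.
by apply: Kadd; apply: Kcanon. Qed.
Lemma qoppE x : qopp (qpi x) = qpi (- x).
Proof. apply/qpi_eq => /=. rewrite -opprD. by apply/Kopp/Kcanon. Qed.
Lemma qscaleE r x : qscale r (qpi x) = qpi (r *: x).
Proof. apply/qpi_eq => /=. rewrite -scalerBr.
by case: hK => _ [_ hs]; apply/hs/Kcanon. Qed.

Lemma qind (P : quot -> Prop) : (forall x, P (qpi x)) -> forall a, P a.
Proof. by move=> h a; rewrite -(qpiK a). Qed.

Lemma qaddA : associative qadd.
Proof. elim/qind=> x; elim/qind=> y; elim/qind=> z. by rewrite !qaddE addrA. Qed.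
Lemma qaddC : commutative qadd.
Proof. elim/qind=> x; elim/qind=> y. by rewrite !qaddE addrC. Qed.
Lemma qadd0 : left_id qzero qadd.
Proof. elim/qind=> x. by rewrite /qzero qaddE add0r. Qed.
Lemma qaddN : left_inverse qzero qopp qadd.
Proof. elim/qind=> x. by rewrite qoppE qaddE addNr. Qed.

HB.instance Definition _ := GRing.isZmodule.Build quot qaddA qaddC qadd0 qaddN.
Lemma qaddE' x y : qpi x + qpi y = qpi (x + y).
Proof. exact: qaddE. Qed.

Lemma qscaleA a b v : qscale a (qscale b v) = qscale (a * b) v.
Proof. elim/qind: v => x. by rewrite !qscaleE scalerA. Qed.
Lemma qscale1 : left_id 1 qscale.
Proof. elim/qind=> x. by rewrite !qscaleE scale1r. Qed.
Lemma qscaleDr : right_distributive qscale (@GRing.add quot).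
Proof. move=> r; elim/qind=> x; elim/qind=> y.
by rewrite qaddE' !qscaleE qaddE' scalerDr. Qed.
Lemma qscaleDl v : {morph qscale^~ v: a b / a + b}.
Proof. elim/qind: v => x a b. by rewrite !qscaleE qaddE' scalerDl. Qed.

HB.instance Definition _ := GRing.Zmodule_isLmodule.Build R quot qscaleA qscale1 qscaleDr qscaleDl.

Lemma qpi_linear : linear qpi.
Proof. red=> r x y. by rewrite -qaddE' -qscaleE. Qed.

End Quot.

Section Subm.
Variables (R : pzRingType) (M : lmodType R) (L : M -> Prop) (hL : is_submod L).

Definition lb (x : M) : bool := if excluded_middle_informative (L x) then true else false.
Lemma lbP x : lb x <-> L x.
Proof. rewrite /lb; case: excluded_middle_informative => //. Qed.

Definition subT := let _ := hL in {x : M | lb x}.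
HB.instance Definition _ := Choice.on subT.

Lemma s0P : lb 0. Proof. apply/lbP; by case: hL. Qed.
Lemma sDP (a b : subT) : lb (sval a + sval b).
Proof. apply/lbP; case: hL => _ [h _]; apply: h; apply/lbP; [case: a|case: b] => //. Qed.
Lemma sZP r (a : subT) : lb (r *: sval a).
Proof. apply/lbP; case: hL => _ [_ h]; apply: h; apply/lbP; case: a => //. Qed.
Lemma sNP (a : subT) : lb (- sval a).
Proof. rewrite -scaleN1r; exact: sZP. Qed.

Definition szero : subT := exist (fun x => lb x) 0 s0P.
Definition sadd (a b : subT) : subT := exist (fun x => lb x) _ (sDP a b).
Definition sopp (a : subT) : subT := exist (fun x => lb x) _ (sNP a).
Definition sscale r (a : subT) : subT := exist (fun x => lb x) _ (sZP r a).

Lemma saddA : associative sadd.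
Proof. move=> a b c; apply: val_inj => /=; exact: addrA. Qed.
Lemma saddC : commutative sadd.
Proof. move=> a b; apply: val_inj => /=; exact: addrC. Qed.
Lemma sadd0 : left_id szero sadd.
Proof. move=> a; apply: val_inj => /=; exact: add0r. Qed.
Lemma saddN : left_inverse szero sopp sadd.
Proof. move=> a; apply: val_inj => /=; exact: addNr. Qed.
HB.instance Definition _ := GRing.isZmodule.Build subT saddA saddC sadd0 saddN.
Lemma sscaleA a b v : sscale a (sscale b v) = sscale (a * b) v.
Proof. apply: val_inj => /=; exact: scalerA. Qed.
Lemma sscale1 : left_id 1 sscale.
Proof. move=> a; apply: val_inj => /=; exact: scale1r. Qed.
Lemma sscaleDr : right_distributive sscale (@GRing.add subT).
Proof. move=> r a b; apply: val_inj => /=; exact: scalerDr. Qed.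
Lemma sscaleDl v : {morph sscale^~ v: a b / a + b}.
Proof. move=> a b; apply: val_inj => /=; exact: scalerDl. Qed.
HB.instance Definition _ := GRing.Zmodule_isLmodule.Build R subT sscaleA sscale1 sscaleDr sscaleDl.

Lemma sval_linear : linear (fun a : subT => sval a).
Proof. by red. Qed.
End Subm.

Section Main.
Variables (R : pzRingType) (M : lmodType R).

Lemma id_lin : linear (fun x : M => x). Proof. by red. Qed.
Definition idL : {linear M -> M} := mklin id_lin.

Lemma comp_lin (U V W : lmodType R) (f : {linear V -> W}) (g : {linear U -> V}) :
  linear (fun x => f (g x)).
Proof. move=> r x y. by rewrite !linearP. Qed.

Definition Q0 (K : M -> Prop) : M -> Prop := fun y => forall f : {linear M -> M}, K (f y).

Lemma Q0_fi K : is_submod K -> fully_invariant (Q0 K).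
Proof.
move=> hK; split; [split; [|split]|].
- by move=> f; rewrite linear0; case: hK.
- by move=> x y hx hy f; rewrite linearD; apply: Kadd.
- by move=> r x hx f; rewrite linearZ; case: hK => _ [_ h]; apply: h.
- move=> g x hx f. exact: (hx (mklin (comp_lin f g))).
Qed.

Lemma Q0_prime K : projective_in_sigma M -> maximal_submod K -> fi_prime (Q0 K).
Proof.
move=> hM [hK [[x0 nx0] hmax]].
split; first exact: Q0_fi.
split; first by exists x0 => h; apply: nx0; exact: (h idL).
move=> N L fN fL hNL.
apply: NNPP => hneg.
have [hN1 hL1] : ~ subm N (Q0 K) /\ ~ subm L (Q0 K) by tauto.
have [n [Nn nQn]] : exists n, N n /\ ~ Q0 K n.
  by apply: NNPP => h; apply: hN1 => y Ny; apply: NNPP => h2; apply: h; exists y.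
have [f nKfn] : exists f : {linear M -> M}, ~ K (f n).
  by apply: NNPP => h; apply: nQn => f; apply: NNPP => h2; apply: h; exists f.
have Nfn : N (f n) by case: fN => _ h; apply: h.
have [l [Ll nQl]] : exists l, L l /\ ~ Q0 K l.
  by apply: NNPP => h; apply: hL1 => y Ny; apply: NNPP => h2; apply: h; exists y.
have [f' nKfl] : exists f0 : {linear M -> M}, ~ K (f0 l).
  by apply: NNPP => h; apply: nQl => f0; apply: NNPP => h2; apply: h; exists f0.
have Lfl : L (f' l) by case: fL => _ h; apply: h.
have hLs : is_submod L by case: fL.
set K' : M -> Prop := fun y => exists k a, K k /\ L a /\ y = k + a.
have hK' : is_submod K'.
  split; [|split].
  - exists 0, 0; split; first by case: hK.
    split; [by case: hLs|by rewrite addr0].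
  - move=> y z [k [a [Kk [La ->]]]] [k' [a' [Kk' [La' ->]]]].
    exists (k + k'), (a + a'); split; first exact: Kadd.
    split; first by case: hLs => _ [h _]; apply: h.
    by rewrite addrACA.
  - move=> r y [k [a [Kk [La ->]]]]; exists (r *: k), (r *: a).
    split; first by case: hK => _ [_ h]; apply: h.
    split; first by case: hLs => _ [_ h]; apply: h.
    by rewrite scalerDr.
have sKK' : subm K K'.
  move=> y Ky; exists y, 0; split => //; split; [by case: hLs|by rewrite addr0].
case: (hmax K' hK' sKK') => [sub|allK'].
  apply: nKfl; apply: sub; exists 0, (f' l); split; first by case: hK.
  by split => //; rewrite add0r.
pose g := mklin (comp_lin (mklin (qpi_linear hK)) (mklin (sval_linear (hL:=hLs)))).
have gsurj : forall q : quot hK, exists s : subT hLs, g s = q.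
  elim/(@qind _ _ _ hK) => m.
  have [k [a [Kk [La ->]]]] := allK' m.
  have la : lb L a by apply/lbP.
  exists (exist (fun x => lb L x) a la).
  rewrite /g /=. apply/qpi_eq.
  by rewrite opprD addrCA subrr addr0; apply: Kopp.
have insig : in_sigma M (subT hLs).
  case: hM => [[L' [i [gen inj]]] _].
  exists L', (mklin (comp_lin i (mklin (sval_linear (hL:=hLs))))); split => //.
  move=> a b /= /inj e; exact: val_inj.
have [h hh] := hM.2 _ insig _ g gsurj (mklin (qpi_linear hK)).
pose e := mklin (comp_lin (mklin (sval_linear (hL:=hLs))) h).
have : prodM N L (e (f n)).
  exists [:: (e, f n)]; split; last by rewrite big_seq1.
  move=> p [<-|[]]; split => //= m.
  rewrite /=. apply/lbP. by case: (h m).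
move=> /hNL /(_ idL); rewrite /= => Ke.
apply: nKfn.
have := hh (f n); rewrite /g /= => /qpi_eq hd.
have -> : f n = e (f n) - (e (f n) - f n) by rewrite opprB addrC subrK.
apply: Ksub => //.
Qed.
End Main.

Theorem proposition4p38 (R : pzRingType) (M : lmodType R)
  (hM : @projective_in_sigma R M) :
  subm (@lowest_radical R M) (@Rad R M).
Proof.
move=> x hx K hK.
exact: (hx _ (Q0_prime hM hK) (idL M)).
Qed.
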